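(* Let $h,h'\colon Z\to X$ and $f,g\colon X\to Y$ be continuous maps such that $f\circ h'\simeq g\circ h'$. Then $\mathrm{D}(f\circ h,g\circ h)\leq \mathrm{D}(h,h')$.
   Context: For continuous maps $f,g\colon X\to Y$, the homotopic distance $\mathrm{D}(f,g)$ is the least integer $n\geq 0$ such that there is an open cover $\{U_0,\dots,U_n\}$ of $X$ with $f|_{U_j}\simeq g|_{U_j}$ for all $j$; if no such cover exists, $\mathrm{D}(f,g)=\infty$. *)

(* Defs.v *)
From HB Require Import structures.
From mathcomp Require Import all_boot all_order all_algebra.
From mathcomp Require Import all_classical all_reals all_analysis.
Set Implicit Arguments. Unset Strict Implicit. Unset Printing Implicit Defensive.
Import Order.TTheory GRing.Theory Num.Theory numFieldNormedType.Exports.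
Local Open Scope classical_set_scope.
Local Open Scope ring_scope.

(* [homotopic_on R U f g] : the restrictions f|_U and g|_U are homotopic,
   i.e. there is H : X * R -> Y whose restriction to U x [0,1] (with the
   subspace topology) is continuous and with H(x,0) = f x, H(x,1) = g x
   for x in U. *)
Definition homotopic_on (R : realType) (X Y : topologicalType)
    (U : set X) (f g : X -> Y) : Prop :=
  exists H : X * R -> Y,
    [/\ {within U `*` `[0%R, 1%R], continuous H},
        (forall x, U x -> H (x, 0%R) = f x) &
        (forall x, U x -> H (x, 1%R) = g x)].

Definition homotopic (R : realType) (X Y : topologicalType) (f g : X -> Y) :=
  homotopic_on R setT f g.

Definition hdist_cover (R : realType) (X Y : topologicalType)
    (f g : X -> Y) (n : nat) : Prop :=
  exists U : 'I_n.+1 -> set X,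
    [/\ (forall j, open (U j)),
        \bigcup_(j in [set: 'I_n.+1]) U j = setT &
        (forall j, homotopic_on R (U j) f g)].

(* homotopic distance: Some n = least such n, None = infinity *)
Definition hdist (R : realType) (X Y : topologicalType) (f g : X -> Y)
    : option nat :=
  match pselect (exists n, `[< hdist_cover R f g n >]) with
  | left P => Some (ex_minn P)
  | right _ => None
  end.

Definition le_ninf (a b : option nat) : Prop :=
  match a, b with
  | _, None => True
  | None, Some _ => False
  | Some m, Some n => (m <= n)%N
  end.

(* Main.v *)
Require Import Defs.
From HB Require Import structures.
From mathcomp Require Import all_boot all_order all_algebra.
From mathcomp Require Import all_classical all_reals all_analysis.
From mathcomp Require Import lra.
Import Order.TTheory GRing.Theory Num.Theory numFieldNormedType.Exports.
Local Open Scope classical_set_scope.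
Local Open Scope ring_scope.
Lemma ctsaff (R : realType) (X : topologicalType) (a b : R) :
  continuous (fun p : X * R => (p.1, a * p.2 + b)).
Proof.
move=> p; rewrite /continuous_at.
have h1 : (fun q : X * R => q.1) @ nbhs p --> p.1 by exact: cvg_fst.
have h2 : (fun q : X * R => a * q.2 + b) @ nbhs p --> a * p.2 + b.
  apply: cvgD; last exact: cvg_cst.
  apply: cvgMr. exact: cvg_snd.
exact: (cvg_pair h1 h2).
Qed.

Lemma closed_snd_le (R : realType) (X : topologicalType) (c : R) :
  closed [set p : X * R | p.2 <= c].
Proof.
have -> : [set p : X * R | p.2 <= c] = (fun p : X * R => p.2) @^-1` [set x | x <= c] by [].
move: (@closed_le R c); apply: (proj1 (continuous_closedP _)).
move=> p; exact: cvg_snd.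
Qed.

Lemma closed_snd_ge (R : realType) (X : topologicalType) (c : R) :
  closed [set p : X * R | c <= p.2].
Proof.
have -> : [set p : X * R | c <= p.2] = (fun p : X * R => p.2) @^-1` [set x | c <= x] by [].
move: (@closed_ge R c); apply: (proj1 (continuous_closedP _)).
move=> p; exact: cvg_snd.
Qed.
Lemma within_comp (T1 T2 U : topologicalType) (A : set T1) (B : set T2)
  (phi : T1 -> T2) (H : T2 -> U) : continuous phi ->
  (forall x, A x -> B (phi x)) -> {within B, continuous H} ->
  {within A, continuous (H \o phi)}.
Proof.
move=> cphi AB /subspace_continuousP cH; apply/subspace_continuousP => x Ax W /=.
move=> /(cH _ (AB _ Ax)) /=.
rewrite /within /= => /cphi.
rewrite nbhs_simpl /=.
apply: filterS => y /= hy Ay; exact: hy (AB _ Ay).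
Qed.
Lemma within_paste (T U : topologicalType) (S C1 C2 : set T) (F : T -> U) :
  closed C1 -> closed C2 -> S `<=` C1 `|` C2 ->
  {within S `&` C1, continuous F} -> {within S `&` C2, continuous F} ->
  {within S, continuous F}.
Proof.
move=> c1 c2 SC /subspace_continuousP h1 /subspace_continuousP h2.
apply/subspace_continuousP => x Sx W /= FW.
suff : nbhs x (fun y => S y -> W (F y)) by [].
have [x1|nx1] := pselect (C1 x); have [x2|nx2] := pselect (C2 x).
- have P1 : nbhs x (fun y => (S `&` C1) y -> W (F y)) := h1 x (conj Sx x1) W FW.
  have P2 : nbhs x (fun y => (S `&` C2) y -> W (F y)) := h2 x (conj Sx x2) W FW.
  apply: filterS (filterI P1 P2) => y [p1 p2] Sy.
  by case: (SC y Sy) => ?; [apply: p1|apply: p2].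
- have P1 : nbhs x (fun y => (S `&` C1) y -> W (F y)) := h1 x (conj Sx x1) W FW.
  have o2 : nbhs x (~` C2) by apply: open_nbhs_nbhs; split => //; exact: closed_openC.
  apply: filterS (filterI P1 o2) => y [p1 p2] Sy.
  by case: (SC y Sy) => // ?; apply: p1.
- have P2 : nbhs x (fun y => (S `&` C2) y -> W (F y)) := h2 x (conj Sx x2) W FW.
  have o1 : nbhs x (~` C1) by apply: open_nbhs_nbhs; split => //; exact: closed_openC.
  apply: filterS (filterI P2 o1) => y [p2 p1] Sy.
  by case: (SC y Sy) => // ?; apply: p2.
- by case: (SC x Sx).
Qed.

Lemma homot_trans (R : realType) (X Y : topologicalType) (U : set X)
  (f g k : X -> Y) :
  homotopic_on R U f g -> homotopic_on R U g k -> homotopic_on R U f k.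
Proof.
move=> [H1 [c1 H10 H11]] [H2 [c2 H20 H21]].
exists (fun p => if p.2 <= 2^-1 then H1 (p.1, 2 * p.2 + 0) else H2 (p.1, 2 * p.2 + (-1))).
split.
- apply: (@within_paste _ _ _ [set p : X * R | p.2 <= 2^-1] [set p : X * R | 2^-1 <= p.2]).
  + exact: closed_snd_le.
  + exact: closed_snd_ge.
  + move=> p _ /=; case: (leP p.2 2^-1) => h; [left|right] => //; exact: ltW.
  + apply: (@subspace_eq_continuous _ _ _ (H1 \o (fun p : X * R => (p.1, 2 * p.2 + 0)))).
      by move=> p /set_mem [_ /= h]; rewrite /from_subspace /= h.
    apply: (@within_comp _ _ _ _ (U `*` `[0%R, 1%R] : set (X * R))); first exact: ctsaff.
      move=> [x t] [[/= Ux tI] th]; split => //=.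
      move: tI; rewrite !in_itv /= => /andP[t0 t1]; apply/andP; split; lra.
    exact: c1.
  + apply: (@subspace_eq_continuous _ _ _ (H2 \o (fun p : X * R => (p.1, 2 * p.2 + (-1))))).
      move=> [x t] /set_mem [[/= Ux _] /= th].
      rewrite /from_subspace /=; case: ifP => // tle.
      have -> : t = 2^-1 by apply/eqP; rewrite eq_le tle th.
      by rewrite mulfV ?pnatr_eq0 // subrr addr0 H11 // H20.
    apply: (@within_comp _ _ _ _ (U `*` `[0%R, 1%R] : set (X * R))); first exact: ctsaff.
      move=> [x t] [[/= Ux tI] th]; split => //=.
      move: tI; rewrite !in_itv /= => /andP[t0 t1]; apply/andP; split; lra.
    exact: c2.
- move=> x Ux /=; rewrite ifT; last lra.
  by rewrite mulr0 addr0 H10.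
- move=> x Ux /=; rewrite ifF; last by apply/negbTE; rewrite -ltNge; lra.
  by rewrite mulr1 (_ : 2 + -1 = 1 :> R) ?H21 //; lra.
Qed.

Lemma homot_sym (R : realType) (X Y : topologicalType) (U : set X)
  (f g : X -> Y) : homotopic_on R U f g -> homotopic_on R U g f.
Proof.
move=> [H [c H0 H1]].
exists (H \o (fun p : X * R => (p.1, -1 * p.2 + 1))); split.
- apply: (@within_comp _ _ _ _ (U `*` `[0%R, 1%R] : set (X * R))) => //; first exact: ctsaff.
  move=> [x t] [/= Ux tI]; split => //=.
  move: tI; rewrite !in_itv /= => /andP[t0 t1]; apply/andP; split; lra.
- by move=> x Ux /=; rewrite mulr0 add0r H1.
- by move=> x Ux /=; rewrite mulr1 addNr H0.
Qed.

Lemma homot_comp (R : realType) (X Y W : topologicalType) (U : set X)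
  (f g : X -> Y) (k : Y -> W) : continuous k ->
  homotopic_on R U f g -> homotopic_on R U (k \o f) (k \o g).
Proof.
move=> ck [H [c H0 H1]].
exists (k \o H); split.
- move=> p; apply: (@continuous_comp _ _ _ (from_subspace (U `*` `[0%R, 1%R]) H) k); [exact: c|exact: ck].
- by move=> x Ux /=; rewrite H0.
- by move=> x Ux /=; rewrite H1.
Qed.

Lemma homot_restr (R : realType) (X Y : topologicalType) (U : set X)
  (f g : X -> Y) : homotopic R f g -> homotopic_on R U f g.
Proof.
move=> [H [c H0 H1]]; exists H; split.
- apply: (@continuous_subspaceW _ _ _ (setT `*` `[0%R, 1%R] : set (X * R))) => //.
  by move=> [x t] [/= _ ?].
- by move=> x _; apply: H0.
- by move=> x _; apply: H1.
Qed.

Lemma cover_transfer (R : realType) (X Y Z : topologicalType)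
    (h h' : Z -> X) (f g : X -> Y) n :
  continuous f -> continuous g ->
  homotopic R (f \o h') (g \o h') ->
  hdist_cover R h h' n -> hdist_cover R (f \o h) (g \o h) n.
Proof.
move=> cf cg hK [U [oU cU hU]]; exists U; split => // j.
apply: (@homot_trans _ _ _ _ _ (f \o h')).
  exact: homot_comp.
apply: (@homot_trans _ _ _ _ _ (g \o h')).
  exact: homot_restr.
by apply: homot_sym; apply: homot_comp.
Qed.

Theorem proposition3p8 (R : realType) (X Y Z : topologicalType)
    (h h' : Z -> X) (f g : X -> Y) :
  continuous h -> continuous h' -> continuous f -> continuous g ->
  homotopic R (f \o h') (g \o h') ->
  le_ninf (hdist R (f \o h) (g \o h)) (hdist R h h').
Proof.
move=> _ _ cf cg hK; rewrite /hdist.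
case: pselect => [P|nP]; case: pselect => [Q|nQ] //=.
- case: ex_minnP => m _ minP.
  case: ex_minnP => n /asboolP cov _.
  apply: minP; apply/asboolP.
  exact: cover_transfer cov.
- apply: nP; case: Q => n /asboolP cov; exists n; apply/asboolP.
  exact: cover_transfer cov.
Qed.
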